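(* Let $b$ be a prime, $k\in\mathbb{N}$, and $c:=\mu_1(k)$. Then for every $L\in\mathcal{L}_{\infty,\infty}$, the integer $\ell\in\mathbb{N}$ with $\vec{\ell}=L^\top\vec{k}$ satisfies $\mu_1(\ell)=c$. Moreover, for every $k'\in\mathbb{N}$ with $\mu_1(k')=c$ and every integer $n\ge c$, \[\Pr\left[L^\top\vec{k}=\vec{k}'\;\middle|\;L\in\mathcal{L}_{\infty,n}\right]=\frac{1}{(b-1)b^{c-1}},\] where $L$ is drawn at random from $\mathcal{L}_{\infty,n}$ and $\vec k'$ is identified with its first $n$ digits.
   Context: $\mathbb{F}_b=\{0,\dots,b-1\}$ is the field with $b$ elements. For $k\in\mathbb{N}_0$ with $b$-adic expansion $k=\kappa_0+\kappa_1b+\cdots$, write $\vec{k}=(\kappa_0,\kappa_1,\ldots)^\top\in\mathbb{F}_b^{\mathbb{N}}$. NRT weight: for $k\in\mathbb{N}$ written as $k=\kappa_1b^{c_1-1}+\cdots+\kappa_vb^{c_v-1}$ with $\kappa_i\in\{1,\dots,b-1\}$ and $c_1>\cdots>c_v>0$, $\mu_1(k)=c_1$; $\mu_1(0)=0$. For $w,n\in\mathbb{N}\cup\{\infty\}$, $\mathcal{L}_{w,n}$ is the set of matrices $L=(\ell_{i,j})\in\mathbb{F}_b^{w\times n}$ with $\ell_{i,j}=0$ if $i<j$ and $\ell_{i,j}\neq0$ if $i=j$. A random element of $\mathcal{L}_{w,n}$ is obtained by choosing each entry independently: diagonal entries uniformly from $\mathbb{F}_b\setminus\{0\}$, entries with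 $i>j$ uniformly from $\mathbb{F}_b$, entries with $i<j$ equal to $0$. For $L\in\mathcal{L}_{\infty,n}$, $L^\top\vec k\in\mathbb{F}_b^n$ is the matrix-vector product over $\mathbb{F}_b$ (a finite sum since $\vec k$ has finitely many nonzero entries). *)

(* Defs.v *)
From HB Require Import structures.
From mathcomp Require Import all_boot all_order all_algebra.
Set Implicit Arguments. Unset Strict Implicit. Unset Printing Implicit Defensive.
Import GRing.Theory.
Local Open Scope ring_scope.

Definition digit (b k i : nat) : nat := ((k %/ b ^ i) %% b)%N.

Definition kvec (b k : nat) (i : nat) : 'F_b := (digit b k i)%:R.

(* NRT weight mu_1(k): (position of highest nonzero digit) + 1, and 0 for k = 0.
   All nonzero digits of k sit at positions i < k (since b^k > k for b >= 2). *)
Definition mu1 (b k : nat) : nat := (\max_(i < k | digit b k i != 0%N) i.+1)%N.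

Definition inLinfinf (b : nat) (L : nat -> nat -> 'F_b) : Prop :=
  forall i j : nat, ((i < j)%N -> L i j = 0) /\ (i = j -> L i j != 0).

(* (L^T vec k)_j = sum_i L_{i,j} kappa_i ; the sum is finite since kappa_i = 0 for i >= k *)
Definition LTk_inf (b : nat) (L : nat -> nat -> 'F_b) (k : nat) (j : nat) : 'F_b :=
  \sum_(i < k) L i j * kvec b k i.

Definition inLfin (b w n : nat) (L : 'M['F_b]_(w, n)) : bool :=
  [forall i : 'I_w, forall j : 'I_n,
     ((i < j)%N ==> (L i j == 0)) && ((nat_of_ord i == nat_of_ord j) ==> (L i j != 0))].

Definition LTk_fin (b w n : nat) (L : 'M['F_b]_(w, n)) (k : nat) (j : 'I_n) : 'F_b :=
  \sum_(i < w) L i j * kvec b k i.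

Definition prob_LTk (b w n k k' : nat) : rat :=
  (#|[set L : 'M['F_b]_(w, n) | inLfin L && [forall j : 'I_n, LTk_fin L k j == kvec b k' j]]|%:R
   / #|[set L : 'M['F_b]_(w, n) | inLfin L]|%:R).

(* Main.v *)
Require Import Defs.
From HB Require Import structures.
From mathcomp Require Import all_boot all_order all_algebra.
Import GRing.Theory.
Set Implicit Arguments. Unset Strict Implicit.
Local Open Scope ring_scope.

Section Digits.
Variable b : nat.
Hypothesis hb : prime b.

Lemma b_gt1 : (1 < b)%N. Proof. exact: prime_gt1. Qed.
Lemma b_gt0 : (0 < b)%N. Proof. exact: prime_gt0. Qed.

Lemma digit_lt m i : (digit b m i < b)%N.
Proof. by rewrite /digit ltn_mod b_gt0. Qed.

Lemma digit_small m i : (m < b ^ i)%N -> digit b m i = 0%N.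
Proof. by move=> h; rewrite /digit divn_small // mod0n. Qed.

Lemma digit_ge m i : (m <= i)%N -> digit b m i = 0%N.
Proof.
move=> h; apply: digit_small.
apply: (leq_ltn_trans h); exact: ltn_expl b_gt1.
Qed.

Lemma digit_nz_lt m i : digit b m i != 0%N -> (i < m)%N.
Proof. apply: contraR; rewrite -leqNgt => h; apply/eqP; exact: digit_ge. Qed.

Lemma mu1_A m i : (mu1 b m <= i)%N -> digit b m i = 0%N.
Proof.
move=> h; apply/eqP; apply: contraLR h => hd.
rewrite -ltnNge.
have him := digit_nz_lt hd.
exact: (@leq_bigmax_cond _ (fun j : 'I_m => digit b m j != 0%N) (fun j : 'I_m => (nat_of_ord j).+1) (Ordinal him)).
Qed.

Lemma mu1_C m d : digit b m d != 0%N -> (forall i, (d < i)%N -> digit b m i = 0%N) ->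
  mu1 b m = d.+1.
Proof.
move=> hd hi; apply/eqP; rewrite eqn_leq; apply/andP; split.
  apply/bigmax_leqP => j hj; rewrite ltnNge; apply/negP => hdj.
  by move: hj; rewrite hi.
exact: (@leq_bigmax_cond _ (fun j : 'I_m => digit b m j != 0%N) (fun j : 'I_m => (nat_of_ord j).+1) (Ordinal (digit_nz_lt hd))).
Qed.

Lemma mu1_B m : (0 < m)%N -> (0 < mu1 b m)%N /\ digit b m (mu1 b m).-1 != 0%N.
Proof.
move=> hm.
set t := trunc_log b m.
have ht : digit b m t != 0%N.
  rewrite /digit modn_small.
    rewrite -lt0n divn_gt0 ?expn_gt0 ?b_gt0 //; exact: trunc_logP b_gt1 hm.
  rewrite ltn_divLR ?expn_gt0 ?b_gt0 //.
  by have := trunc_log_ltn m b_gt1; rewrite expnS.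
have hpos : (0 < mu1 b m)%N.
  case: (posnP (mu1 b m)) => // h0.
  by move: ht; rewrite mu1_A // h0.
split => //.
apply/negP => /eqP hz.
have : (mu1 b m <= (mu1 b m).-1)%N.
  apply/bigmax_leqP => j hj.
  rewrite leqNgt; apply/negP => hlt.
  rewrite ltnS leq_eqVlt in hlt.
  case/orP: hlt => [/eqP he | hlt].
    by move: hj; rewrite -he hz.
  by move: hj; rewrite mu1_A ?eqxx // -(prednK hpos).
move=> h.
by move: h; rewrite -{1}(prednK hpos) ltnn.
Qed.

Lemma digit_sum N (f : nat -> nat) i : (forall j, (f j < b)%N) ->
  digit b (\sum_(j < N) f j * b ^ j)%N i = if (i < N)%N then f i else 0%N.
Proof.
elim: N f i => [|N IH] f i hf.
  by rewrite big_ord0 /digit div0n mod0n.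
rewrite big_ord_recl /= expn0 muln1.
have -> : (\sum_(j < N) f (bump 0 j) * b ^ (bump 0 j))%N =
          ((\sum_(j < N) f j.+1 * b ^ j) * b)%N.
  rewrite big_distrl /=; apply: eq_bigr => j _.
  by rewrite /bump /= add1n expnSr mulnA.
case: i => [|i].
  by rewrite /digit expn0 divn1 addnC modnMDl modn_small.
rewrite /digit expnS divnMA addnC divnMDl ?b_gt0 // (divn_small (hf 0%N)) addn0.
rewrite -/(digit b _ i).
by rewrite (IH (fun j => f j.+1)) ?ltnS.
Qed.

Lemma Fp_val_nat (x : 'F_b) : (nat_of_ord x)%:R = x.
Proof.
apply: val_inj; rewrite /= val_Fp_nat // modn_small //.
by case: x => /= x; rewrite Fp_cast.
Qed.

Lemma Fp_val_lt (x : 'F_b) : (nat_of_ord x < b)%N.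
Proof. by case: x => /= x; rewrite Fp_cast. Qed.

Lemma kvec_eq0 m i : (kvec b m i == 0) = (digit b m i == 0%N).
Proof.
rewrite /kvec -val_eqE /= val_Fp_nat // modn_small //; exact: digit_lt.
Qed.

End Digits.

Section Main.
Variable b : nat.
Hypothesis hb : prime b.
Variable k : nat.
Variable c : nat.
Hypothesis hc : (0 < c)%N.
Hypothesis hkd : digit b k c.-1 != 0%N.
Hypothesis hkz : forall i, (c <= i)%N -> digit b k i = 0%N.

Let kap := kvec b k c.-1.
Lemma kap_neq0 : kap != 0.
Proof. by rewrite /kap kvec_eq0. Qed.

Lemma kvec_high i : (c <= i)%N -> kvec b k i = 0.
Proof. by move=> h; apply/eqP; rewrite kvec_eq0 // hkz. Qed.

Lemma c_le_k : (c <= k)%N.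
Proof. by rewrite -(prednK hc); apply: (digit_nz_lt hb). Qed.

Lemma LTk_inf_high (L : nat -> nat -> 'F_b) j : inLinfinf L -> (c <= j)%N -> LTk_inf L k j = 0.
Proof.
move=> hL hj; apply: big1 => i _.
case: (ltnP i j) => hij; first by rewrite (proj1 (hL _ _) hij) mul0r.
by rewrite kvec_high ?mulr0 // (leq_trans hj hij).
Qed.

Lemma LTk_inf_diag (L : nat -> nat -> 'F_b) : inLinfinf L -> LTk_inf L k c.-1 = L c.-1 c.-1 * kap.
Proof.
move=> hL.
have hlt : (c.-1 < k)%N by apply: (digit_nz_lt hb).
rewrite /LTk_inf (bigD1 (Ordinal hlt)) //= big1 ?addr0 // => i hi.
case: (ltngtP i c.-1) => h.
- by rewrite (proj1 (hL _ _) h) mul0r.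
- by rewrite kvec_high ?mulr0 // -(prednK hc).
- by move: hi; rewrite -val_eqE /= h eqxx.
Qed.

Lemma part1 (L : nat -> nat -> 'F_b) : inLinfinf L ->
     (exists l : nat, forall j, kvec b l j = LTk_inf L k j) /\
     (forall l : nat, (forall j, kvec b l j = LTk_inf L k j) -> mu1 b l = c).
Proof.
move=> hL; split.
  exists (\sum_(j < k) nat_of_ord (LTk_inf L k j) * b ^ j)%N => j.
  rewrite /kvec (@digit_sum b hb k (fun j => nat_of_ord (LTk_inf L k j))); last first.
    by move=> i; apply: Fp_val_lt.
  case: ifP => hj; first by rewrite Fp_val_nat.
  rewrite LTk_inf_high //; apply: (leq_trans c_le_k); by rewrite leqNgt hj.
move=> l hl.
rewrite -(prednK hc); apply: (mu1_C hb).
  by rewrite -(kvec_eq0 hb) hl LTk_inf_diag // mulf_neq0 ?kap_neq0 // (proj2 (hL _ _)).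
move=> i hi; apply/eqP; rewrite -(kvec_eq0 hb) hl LTk_inf_high //.
by rewrite -(prednK hc).
Qed.


Variables w n : nat.
Hypothesis hcn : (c <= n)%N.
Hypothesis hnw : (n <= w)%N.

Lemma c1n : (c.-1 < n)%N. Proof. by rewrite prednK. Qed.
Lemma c1w : (c.-1 < w)%N. Proof. exact: leq_trans c1n hnw. Qed.
Let i0 : 'I_w := Ordinal c1w.
Let j0 : 'I_n := Ordinal c1n.

Definition lowtri (M : 'M['F_b]_(w, n)) :=
  forall (i : 'I_w) (j : 'I_n), (i < j)%N -> M i j = 0.

Lemma inLfinP (M : 'M['F_b]_(w, n)) :
  reflect (lowtri M /\ (forall (i : 'I_w) (j : 'I_n), (i : nat) = j -> M i j != 0))
          (inLfin M).
Proof.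
apply: (iffP forallP) => [h | [h1 h2] i].
  split => [i j hij | i j hij].
    by have /forallP /(_ j) /andP [/implyP /(_ hij) /eqP -> _] := h i.
  by have /forallP /(_ j) /andP [_ /implyP /(_ (introT eqP hij))] := h i.
apply/forallP => j; apply/andP; split; apply/implyP => hij.
  by rewrite h1.
by apply: h2; apply/eqP.
Qed.

Lemma LTk_fin_high M (j : 'I_n) : lowtri M -> (c <= j)%N -> LTk_fin M k j = 0.
Proof.
move=> hL hj; apply: big1 => i _.
case: (ltnP i j) => hij; first by rewrite hL // mul0r.
by rewrite kvec_high ?mulr0 // (leq_trans hj hij).
Qed.

Lemma LTk_fin_diag M : lowtri M -> LTk_fin M k j0 = M i0 j0 * kap.
Proof.
move=> hL.
rewrite /LTk_fin (bigD1 i0) //= big1 ?addr0 // => i hi.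
case: (ltngtP i c.-1) => h.
- by rewrite hL ?mul0r.
- by rewrite kvec_high ?mulr0 // -(prednK hc).
- by move: hi; rewrite -val_eqE /= h eqxx.
Qed.

Lemma LTk_finD (A B : 'M['F_b]_(w, n)) j :
  LTk_fin (A + B) k j = LTk_fin A k j + LTk_fin B k j.
Proof. by rewrite /LTk_fin -big_split; apply: eq_bigr => i _; rewrite mxE mulrDl. Qed.

Definition vecof (M : 'M['F_b]_(w, n)) : {ffun 'I_n -> 'F_b} := [ffun j => LTk_fin M k j].

Definition Fam (j : 'I_n) := [pred x : 'F_b | if (j < c.-1)%N then true
   else if (j == c.-1 :> nat) then x != 0 else x == 0].

Definition Sv (v : {ffun 'I_n -> 'F_b}) := [set M : 'M['F_b]_(w, n) | inLfin M && (vecof M == v)].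

Lemma vec_in_fam M : inLfin M -> vecof M \in family Fam.
Proof.
move=> /inLfinP [h1 h2]; apply/familyP => j; rewrite ffunE inE.
case: ltnP => // hle; case: eqP => hj.
  have -> : j = j0 by apply: val_inj.
  by rewrite LTk_fin_diag // mulf_neq0 ?kap_neq0 // h2.
rewrite LTk_fin_high //.
by move: hle; rewrite leq_eqVlt eq_sym (introF eqP hj) /= prednK.
Qed.

Definition Delta (v v2 : {ffun 'I_n -> 'F_b}) : 'M['F_b]_(w, n) :=
  \matrix_(i, j) if ((i : nat) == c.-1) && (j < c)%N then (v2 j - v j) / kap else 0.

Lemma LTk_fin_Delta v v2 j :
  LTk_fin (Delta v v2) k j = if (j < c)%N then v2 j - v j else 0.
Proof.
rewrite /LTk_fin (bigD1 i0) //= big1 ?addr0 => [|i hi]; last first.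
  rewrite mxE; case: ifP => [/andP [hi0 _]|_]; last by rewrite mul0r.
  by move: hi; rewrite -val_eqE /= hi0.
rewrite mxE /= eqxx /=; case: ifP => _; last by rewrite mul0r.
by rewrite divfK // kap_neq0.
Qed.

Lemma fam_high v (j : 'I_n) : v \in family Fam -> (c <= j)%N -> v j = 0.
Proof.
move=> /familyP /(_ j); rewrite inE => h hj.
move: h; rewrite ltnNge (leq_trans _ hj) ?leq_pred //=.
have -> : (j == c.-1 :> nat) = false.
  by apply/negP => /eqP he; move: hj; rewrite he -{1}(prednK hc) ltnn.
by move/eqP.
Qed.

Lemma shift v v2 M : v \in family Fam -> v2 \in family Fam -> M \in Sv v ->
  M + Delta v v2 \in Sv v2.
Proof.
move=> hv hv2; rewrite inE => /andP [hM /eqP hMv].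
have hvec : vecof (M + Delta v v2) = v2.
  apply/ffunP => j; rewrite ffunE LTk_finD LTk_fin_Delta.
  have -> : LTk_fin M k j = v j by rewrite -hMv ffunE.
  case: ifP => hj; first by rewrite addrC subrK.
  by rewrite addr0 !fam_high // leqNgt hj.
move/inLfinP: hM => [h1 h2].
have hlow : lowtri (M + Delta v v2).
  move=> i j hij; rewrite !mxE h1 // add0r.
  case: ifP => // /andP [/eqP hi hj].
  by move: hij; rewrite hi ltnNge -ltnS prednK // hj.
rewrite inE hvec eqxx andbT; apply/inLfinP; split => // i j hij.
case: (eqVneq (i : nat) c.-1) => hi.
  have ei : i = i0 by apply: val_inj.
  have ej : j = j0 by apply: val_inj; rewrite /= -hij.
  rewrite ei ej; apply/eqP => h0.
  have /familyP /(_ j0) := hv2; rewrite inE /= ltnn eqxx => /eqP; apply.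
  by rewrite -hvec ffunE LTk_fin_diag // h0 mul0r.
by rewrite !mxE (negbTE hi) addr0 h2.
Qed.



Lemma card_Sv_le v v2 : v \in family Fam -> v2 \in family Fam -> (#|Sv v| <= #|Sv v2|)%N.
Proof.
move=> hv hv2.
rewrite -(card_in_imset (f := fun M => M + Delta v v2)); last first.
  by move=> x y _ _; apply: addIr.
apply: subset_leq_card; apply/subsetP => M' /imsetP [M hM ->].
exact: shift.
Qed.

Lemma card_Sv_eq v v2 : v \in family Fam -> v2 \in family Fam -> #|Sv v| = #|Sv v2|.
Proof. by move=> hv hv2; apply/eqP; rewrite eqn_leq !card_Sv_le. Qed.

Lemma card_S v2 : v2 \in family Fam ->
  #|[set M : 'M['F_b]_(w, n) | inLfin M]| = (#|family Fam| * #|Sv v2|)%N.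
Proof.
move=> hv2.
rewrite -sum1_card (partition_big vecof (mem (family Fam))); last first.
  by move=> M; rewrite inE; apply: vec_in_fam.
rewrite -sum_nat_const; apply: eq_bigr => v hv.
rewrite sum1dep_card -(card_Sv_eq hv hv2); apply: eq_card => M.
by rewrite !inE.
Qed.


Lemma card_fam : #|family Fam| = ((b - 1) * b ^ (c - 1))%N.
Proof.
pose g (j : nat) := if (j < c.-1)%N then b else if j == c.-1 then (b - 1)%N else 1%N.
have cF j : #|Fam j| = g j.
  rewrite /g; case: ifP => h1.
    transitivity #|'F_b|; last exact: card_Fp hb.
    apply: eq_card => x; by rewrite !inE h1.
  case: ifP => h2.
    transitivity #|'F_b|.-1; last by rewrite card_Fp // subn1.
    rewrite -(cardC1 (0 : 'F_b)); apply: eq_card => x; by rewrite !inE h1 h2.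
  rewrite -(card1 (0 : 'F_b)); apply: eq_card => x; by rewrite !inE h1 h2.
rewrite card_family foldrE big_map big_enum /=.
rewrite (eq_bigr (fun j : 'I_n => g j)); last by move=> j _; exact: cF.
rewrite -(big_mkord xpredT g) (@big_cat_nat _ _ _ c.-1 0 n) //=; last exact: leq_trans (leq_pred c) hcn.
rewrite (@big_cat_nat _ _ _ c c.-1 n) ?leq_pred //=.
rewrite (@eq_big_nat _ _ _ 0 c.-1 _ (fun _ => b)); last by move=> i /andP [_ hi]; rewrite /g hi.
rewrite prod_nat_const_nat subn0.
have -> : (\prod_(c.-1 <= i < c) g i = b - 1)%N.
  by rewrite -{2}(prednK hc) big_nat1 /g ltnn eqxx.
rewrite big_nat_cond big1 ?muln1; last first.
  move=> i /andP [/andP [hci _] _]; rewrite /g ltnNge (leq_trans _ hci) ?leq_pred //=.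
  by case: eqP => // he; move: hci; rewrite he -{1}(prednK hc) ltnn.
by rewrite mulnC !subn1.
Qed.

End Main.

Theorem lemma2p13 (b : nat) (hb : prime b) (k : nat) (hk : (0 < k)%N) :
  let c := mu1 b k in
  (forall L : nat -> nat -> 'F_b, inLinfinf L ->
     (exists l : nat, forall j, kvec b l j = LTk_inf L k j) /\
     (forall l : nat, (forall j, kvec b l j = LTk_inf L k j) -> mu1 b l = c)) /\
  (forall (k' n w : nat), (0 < k')%N -> mu1 b k' = c -> (c <= n)%N -> (n <= w)%N ->
     prob_LTk b w n k k' = (((b - 1) * b ^ (c - 1))%N%:R)^-1).
Proof.
move=> c.
have [hc hkd] := mu1_B hb hk.
have hkz : forall i, (c <= i)%N -> digit b k i = 0%N by move=> i; exact: mu1_A.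
split; first by move=> L hL; exact: part1.
move=> k' n w hk' hmu hcn hnw.
set v' := [ffun j : 'I_n => kvec b k' j].
have hv' : v' \in family (Fam b c (n := n)).
  have [_ hk'd] := mu1_B hb hk'; rewrite hmu in hk'd.
  apply/familyP => j; rewrite ffunE inE.
  case: ltnP => // hle; case: eqP => hj.
    by rewrite hj (kvec_eq0 hb).
  rewrite (kvec_eq0 hb); apply/eqP; apply: mu1_A => //; rewrite hmu.
  by move: hle; rewrite leq_eqVlt eq_sym (introF eqP hj) /= prednK.
have hset : [set L : 'M['F_b]_(w, n) | inLfin L && [forall j : 'I_n, LTk_fin L k j == kvec b k' j]]
            = Sv k w v'.
  apply/setP => L; rewrite !inE; congr andb.
  apply/forallP/eqP => [h | h].
    by apply/ffunP => j; rewrite !ffunE; apply/eqP/h.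
  by move=> j; have := congr1 (fun f : {ffun 'I_n -> 'F_b} => f j) h; rewrite /= !ffunE => ->.
rewrite /prob_LTk hset (card_S hb hc hkd hkz hcn hnw hv') (card_fam hb hc hcn).
pose Id : 'M['F_b]_(w, n) := \matrix_(i, j) (if (i : nat) == j then 1 else 0).
have hId : inLfin Id.
  apply/inLfinP; split => [i j hij | i j hij]; rewrite mxE.
    by rewrite ltn_eqF.
  by rewrite hij eqxx oner_neq0.
have hpos : (0 < #|Sv k w v'|)%N.
  rewrite -(card_Sv_eq hb hc hkd hkz hcn hnw (vec_in_fam hb hc hkd hkz hcn hnw hId) hv').
  by apply/card_gt0P; exists Id; rewrite inE hId eqxx.
rewrite natrM invfM mulrCA mulfV ?mulr1 //.
by rewrite Num.Theory.pnatr_eq0 -lt0n.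
Qed.
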